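(* Let $K$ be a field and $q\in K$ a primitive $e$-th root of unity, where $e\ge 2$ is even. Let $D$ be the one-dimensional $\mathcal{H}_q(D_e)$-module on which $T_i^D$ acts as $-1$ for $0\le i\le e-1$, and $P$ its projective cover. Let $D^\lambda$ be the one-dimensional $\mathcal{H}_{q,1}(B_e)$-module on which $T_i^B$ acts as $-1$ for $0\le i\le e-1$, and $P^\lambda$ its projective cover. Then $P\cong \mathrm{Res}(P^\lambda)$ as $\mathcal{H}_q(D_e)$-modules.
   Context: $\mathcal{H}_{q,1}(B_n)$ is the $K$-algebra with generators $T_0^B,\dots,T_{n-1}^B$ and relations $(T_0^B+1)(T_0^B-1)=0$, $(T_i^B+1)(T_i^B-q)=0$ ($1\le i\le n-1$), $T_0^BT_1^BT_0^BT_1^B=T_1^BT_0^BT_1^BT_0^B$, $T_{i+1}^BT_i^BT_{i+1}^B=T_i^BT_{i+1}^BT_i^B$ ($1\le i\le n-2$), $T_i^BT_j^B=T_j^BT_i^B$ ($0\le i<j-1\le n-2$). $\mathcal{H}_q(D_n)$ is the $K$-algebra with generators $T_0^D,\dots,T_{n-1}^D$ and relations $(T_i^D+1)(T_i^D-q)=0$ ($0\le i\le n-1$), $T_0^DT_2^DT_0^D=T_2^DT_0^DT_2^D$, $T_0^DT_i^D=T_i^DT_0^D$ ($i\neq 2$), $T_{i+1}^DT_i^DT_{i+1}^D=T_i^DT_{i+1}^DT_i^D$ ($1\le i\le n-2$), $T_i^DT_j^D=T_j^DT_i^D$ ($1\le i<j-1\le n-2$). $\mathrm{Res}$ denotes restriction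 along the injective algebra homomorphism $\phi:\mathcal{H}_q(D_n)\to\mathcal{H}_{q,1}(B_n)$, $T_0^D\mapsto T_0^BT_1^BT_0^B$, $T_i^D\mapsto T_i^B$ ($1\le i\le n-1$). *)

(* Defs.v *)
From HB Require Import structures.
From mathcomp Require Import all_boot all_order all_algebra.
Set Implicit Arguments. Unset Strict Implicit. Unset Printing Implicit Defensive.
Import GRing.Theory.
Local Open Scope ring_scope.

(* Finite-dimensional modules over an algebra presented by generators
   T_0, ..., T_{n-1}: a module of dimension d is a family of matrices
   rho : nat -> 'M[K]_d (only rho 0, ..., rho (n-1) matter), acting on
   column vectors v : 'cV_d by v |-> rho i *m v, satisfying the defining
   relations (products written in the same order as in the algebra). *)

Section Hecke.
Variable K : fieldType.

Definition isHB (q : K) (n : nat) (d : nat) (rho : nat -> 'M[K]_d) : Prop :=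
  [/\ (rho 0%N + 1%:M) *m (rho 0%N - 1%:M) = 0,
      (forall i, (1 <= i <= n.-1)%N -> (rho i + 1%:M) *m (rho i - q%:M) = 0),
      rho 0%N *m rho 1%N *m rho 0%N *m rho 1%N
        = rho 1%N *m rho 0%N *m rho 1%N *m rho 0%N,
      (forall i, (1 <= i <= n - 2)%N ->
         rho i.+1 *m rho i *m rho i.+1 = rho i *m rho i.+1 *m rho i) &
      (forall i j, (i < j.-1)%N -> (j.-1 <= n - 2)%N -> (1 <= j)%N ->
         rho i *m rho j = rho j *m rho i)].

Definition isHD (q : K) (n : nat) (d : nat) (rho : nat -> 'M[K]_d) : Prop :=
  [/\ (forall i, (i <= n.-1)%N -> (rho i + 1%:M) *m (rho i - q%:M) = 0),
      (2 < n)%N -> rho 0%N *m rho 2%N *m rho 0%N = rho 2%N *m rho 0%N *m rho 2%N,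
      (forall i, (i <= n.-1)%N -> i != 2%N -> rho 0%N *m rho i = rho i *m rho 0%N),
      (forall i, (1 <= i <= n - 2)%N ->
         rho i.+1 *m rho i *m rho i.+1 = rho i *m rho i.+1 *m rho i) &
      (forall i j, (1 <= i)%N -> (i < j.-1)%N -> (j.-1 <= n - 2)%N -> (1 <= j)%N ->
         rho i *m rho j = rho j *m rho i)].

Definition is_hom (n : nat) (d1 d2 : nat) (rho1 : nat -> 'M[K]_d1)
  (rho2 : nat -> 'M[K]_d2) (f : 'M[K]_(d2, d1)) : Prop :=
  forall i, (i < n)%N -> f *m rho1 i = rho2 i *m f.

Definition is_surj (d1 d2 : nat) (f : 'M[K]_(d2, d1)) : Prop := \rank f = d2.

Definition mod_iso (n : nat) (d1 d2 : nat) (rho1 : nat -> 'M[K]_d1)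
  (rho2 : nat -> 'M[K]_d2) : Prop :=
  exists (f : 'M[K]_(d2, d1)) (g : 'M[K]_(d1, d2)),
    [/\ is_hom n rho1 rho2 f, is_hom n rho2 rho1 g,
        g *m f = 1%:M & f *m g = 1%:M].

Definition projective (rel : forall d, (nat -> 'M[K]_d) -> Prop) (n : nat)
  (dP : nat) (rhoP : nat -> 'M[K]_dP) : Prop :=
  forall (dM : nat) (rhoM : nat -> 'M[K]_dM) (dN : nat) (rhoN : nat -> 'M[K]_dN)
    (pi : 'M[K]_(dN, dM)) (f : 'M[K]_(dN, dP)),
    rel dM rhoM -> rel dN rhoN ->
    is_hom n rhoM rhoN pi -> is_surj pi -> is_hom n rhoP rhoN f ->
    exists g : 'M[K]_(dM, dP), is_hom n rhoP rhoM g /\ pi *m g = f.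

Definition essential_epi (rel : forall d, (nat -> 'M[K]_d) -> Prop) (n : nat)
  (dP : nat) (rhoP : nat -> 'M[K]_dP) (dS : nat) (rhoS : nat -> 'M[K]_dS)
  (p : 'M[K]_(dS, dP)) : Prop :=
  [/\ is_hom n rhoP rhoS p, is_surj p &
      forall (dM : nat) (rhoM : nat -> 'M[K]_dM) (g : 'M[K]_(dP, dM)),
        rel dM rhoM -> is_hom n rhoM rhoP g -> is_surj (p *m g) -> is_surj g].

Definition projective_cover (rel : forall d, (nat -> 'M[K]_d) -> Prop) (n : nat)
  (dP : nat) (rhoP : nat -> 'M[K]_dP) (dS : nat) (rhoS : nat -> 'M[K]_dS) : Prop :=
  [/\ rel dP rhoP, projective rel n rhoP &
      exists p : 'M[K]_(dS, dP), essential_epi rel n rhoP rhoS p].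

Definition resBD (d : nat) (rho : nat -> 'M[K]_d) : nat -> 'M[K]_d :=
  fun i => if i == 0%N then rho 0%N *m rho 1%N *m rho 0%N else rho i.

Definition sign_mod : nat -> 'M[K]_1 := fun _ => - 1%:M.

End Hecke.

(* Main.v *)
Require Import Defs.
From mathcomp Require Import all_boot all_order all_algebra.
From mathcomp Require Import zify ring.
Set Implicit Arguments. Unset Strict Implicit. Unset Printing Implicit Defensive.
Import GRing.Theory.
Local Open Scope ring_scope.

Section SubMod.
Variables (K : fieldType) (q : K) (e : nat) (He : (2 <= e)%N).
Variables (d : nat) (rho : nat -> 'M[K]_d) (HB : isHB q e rho).
Variables (k : nat) (S : 'M[K]_(k, d)).
Hypothesis Sinv : forall i, (i < e)%N -> (S *m (rho i)^T <= S)%MS.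

Let E := pinvmx S *m S.
Let Q := E^T.
Let R := 1%:M - Q.
Let Phi (X : 'M[K]_d) (c : K) := Q *m X *m Q + c *: R.
Let inv (X : 'M[K]_d) := X *m Q = Q *m X *m Q.

Lemma SE : S *m E = S.
Proof. by rewrite /E mulmxA mulmxKpV. Qed.

Lemma EE : E *m E = E.
Proof. by rewrite {1}/E -mulmxA SE. Qed.

Lemma QQ : Q *m Q = Q.
Proof. by rewrite /Q -trmx_mul EE. Qed.

Lemma QR : Q *m R = 0.
Proof. by rewrite /R mulmxBr QQ mulmx1 subrr. Qed.
Lemma RQ : R *m Q = 0.
Proof. by rewrite /R mulmxBl QQ mul1mx subrr. Qed.
Lemma RR : R *m R = R.
Proof. by rewrite {1}/R mulmxBl QR mul1mx subr0. Qed.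

Lemma PhiM X Y c c' : inv Y -> Phi X c *m Phi Y c' = Phi (X *m Y) (c * c').
Proof.
move=> iY; rewrite /Phi mulmxDl !mulmxDr.
have h1 : Q *m X *m Q *m (Q *m Y *m Q) = Q *m (X *m Y) *m Q.
  have -> : Q *m X *m Q *m (Q *m Y *m Q) = Q *m X *m (Q *m Q *m Y *m Q).
    by rewrite -!mulmxA.
  by rewrite QQ -iY !mulmxA.
have h2 : Q *m X *m Q *m (c' *: R) = 0.
  by rewrite -scalemxAr -(mulmxA (Q *m X) Q R) QR mulmx0 scaler0.
have h3 : c *: R *m (Q *m Y *m Q) = 0.
  by rewrite -scalemxAl !mulmxA RQ !mul0mx scaler0.
have h4 : c *: R *m (c' *: R) = (c * c') *: R.
  by rewrite -scalemxAl -scalemxAr RR scalerA.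
by rewrite h1 h2 h3 h4 addr0 add0r.
Qed.

Lemma PhiD X Y c c' : Phi X c + Phi Y c' = Phi (X + Y) (c + c').
Proof. rewrite /Phi mulmxDr mulmxDl scalerDl. 
by rewrite -!addrA; congr (_ + _); rewrite addrC -!addrA; congr (_ + _); rewrite addrC. Qed.

Lemma PhiB X Y c c' : Phi X c - Phi Y c' = Phi (X - Y) (c - c').
Proof. rewrite /Phi mulmxBr mulmxBl scalerBl opprD.
by rewrite -!addrA; congr (_ + _); rewrite addrC -!addrA; congr (_ + _); rewrite addrC. Qed.

Lemma Phi_scal a : Phi a%:M a = a%:M.
Proof. rewrite /Phi /R mul_mx_scalar -scalemxAl QQ scalerBr scalemx1.
by rewrite addrC subrK. Qed.

Lemma Phi0 : Phi 0 0 = 0.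
Proof. by rewrite /Phi mulmx0 mul0mx scale0r addr0. Qed.

Lemma invM X Y : inv X -> inv Y -> inv (X *m Y).
Proof. rewrite /inv; move=> hX hY.
rewrite -mulmxA hY !mulmxA hX.
have -> : Q *m X *m Q *m Y *m Q = Q *m X *m (Q *m Y *m Q) by rewrite !mulmxA.
by rewrite -hY !mulmxA.
Qed.
Lemma invD X Y : inv X -> inv Y -> inv (X + Y).
Proof. rewrite /inv; move=> hX hY. by rewrite mulmxDl mulmxDr mulmxDl hX hY. Qed.
Lemma invB X Y : inv X -> inv Y -> inv (X - Y).
Proof. rewrite /inv; move=> hX hY. by rewrite mulmxBl mulmxBr mulmxBl hX hY. Qed.
Lemma invN X : inv X -> inv (- X).
Proof. rewrite /inv; move=> hX. by rewrite mulNmx mulmxN mulNmx hX. Qed.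
Lemma invS a : inv a%:M.
Proof. by rewrite /inv mul_mx_scalar mul_scalar_mx -scalemxAl QQ. Qed.

Lemma inv_rho i : (i < e)%N -> inv (rho i).
Proof.
move=> lt; rewrite /inv; apply: trmx_inj; rewrite !trmx_mul /Q trmxK.
have h := Sinv lt.
have h2 : (E *m (rho i)^T <= S)%MS.
  by rewrite /E -mulmxA; apply: mulmx_sub.
by rewrite mulmxA; rewrite {2}/E mulmxA (mulmxKpV h2).
Qed.


Let rho' i := Phi (rho i) (-1).

Ltac invt := repeat match goal with
 | |- inv (_ *m _) => apply: invM
 | |- inv (_ - _) => apply: invB
 | |- inv (_ + _) => apply: invD
 | |- inv (- _) => apply: invN
 | |- inv (_%:M) => apply: invS
 | |- inv (rho _) => apply: inv_rho; lia
end.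

Lemma isHB_rho' : isHB q e rho'.
Proof.
have He1 : (1 < e)%N by [].
case: HB => h1 h2 h3 h4 h5; split.
- rewrite /rho' -(Phi_scal 1) PhiD PhiB PhiM; last first.
    by invt.
  by rewrite h1 addNr mul0r Phi0.
- move=> i hi; rewrite /rho' -(Phi_scal 1) -(Phi_scal q) PhiD PhiB PhiM; last by invt.
  by rewrite h2 // addNr mul0r Phi0.
- rewrite /rho' !PhiM; try by invt.
  by rewrite h3 ?mulrA.
- move=> i hi; rewrite /rho' !PhiM; try by invt.
  by rewrite h4 // ?mulrA.
- move=> i j h h' h''; rewrite /rho' !PhiM; try by invt.
  by rewrite h5 // mulrC.
Qed.

Lemma hom_Q : is_hom e rho' rho Q.
Proof.
move=> i hi; rewrite /rho' /Phi mulmxDr -scalemxAr QR scaler0 addr0.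
by rewrite !mulmxA QQ -inv_rho.
Qed.

Variable (p : 'M[K]_(1, d)).
Hypothesis Hp : essential_epi (isHB q e) e rho (sign_mod K) p.

Lemma ess_sub : S *m p^T != 0 -> \rank S = d.
Proof.
move=> nz; case: Hp => _ _ ess.
have rQ : \rank Q = d.
  apply: (ess _ rho' Q isHB_rho' hom_Q).
  rewrite /is_surj; apply/eqP; rewrite eqn_leq rank_leq_row lt0n mxrank_eq0.
  apply: contra nz => /eqP pQ.
  by rewrite -SE -mulmxA -[E]trmxK -trmx_mul -/Q pQ trmx0 mulmx0.
apply/eqP; rewrite eqn_leq rank_leq_col -{1}rQ /Q mxrank_tr.
exact: mxrankS (submxMl _ _).
Qed.

End SubMod.

Section Blocks.
Variable K : fieldType.

Definition dg m n (A B : 'M[K]_(m, n)) : 'M[K]_(m + m, n + n) := block_mx A 0 0 B.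
Definition swp m : 'M[K]_(m + m) := block_mx 0 1%:M 1%:M 0.

Lemma dgM m n p (A B : 'M[K]_(m, n)) (C D : 'M[K]_(n, p)) :
  dg A B *m dg C D = dg (A *m C) (B *m D).
Proof. by rewrite /dg mulmx_block !mulmx0 !mul0mx !addr0 !add0r. Qed.

Lemma dgD m n (A B C D : 'M[K]_(m, n)) : dg A B + dg C D = dg (A + C) (B + D).
Proof. by rewrite /dg add_block_mx !addr0. Qed.

Lemma dgN m n (A B : 'M[K]_(m, n)) : - dg A B = dg (- A) (- B).
Proof. by rewrite /dg opp_block_mx !oppr0. Qed.

Lemma dgB m n (A B C D : 'M[K]_(m, n)) : dg A B - dg C D = dg (A - C) (B - D).
Proof. by rewrite dgN dgD. Qed.

Lemma dgS m (a : K) : dg (a%:M : 'M_m) a%:M = a%:M.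
Proof. by rewrite /dg -scalar_mx_block. Qed.

Lemma dg0 m n : dg (0 : 'M[K]_(m, n)) 0 = 0.
Proof. by rewrite /dg block_mx0. Qed.

Lemma swpM m n (A B : 'M[K]_(m, n)) : swp m *m dg A B = dg B A *m swp n.
Proof.
by rewrite /dg /swp !mulmx_block !mulmx0 !mul0mx !addr0 !add0r !mul1mx !mulmx1.
Qed.

Lemma swpK m : swp m *m swp m = 1%:M.
Proof.
by rewrite /swp mulmx_block !mulmx0 !mul0mx !addr0 !add0r !mul1mx -scalar_mx_block.
Qed.

Lemma dg_eq m n (A B C D : 'M[K]_(m, n)) : A = C -> B = D -> dg A B = dg C D.
Proof. by move=> -> ->. Qed.

End Blocks.

Section CoInd.
Variables (K : fieldType) (q : K) (e : nat) (He : (2 <= e)%N).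

Definition coind d (sig : nat -> 'M[K]_d) (i : nat) : 'M[K]_(d + d) :=
  if i == 0%N then swp K d else if i == 1%N then dg (sig 1%N) (sig 0%N)
  else dg (sig i) (sig i).

Lemma coind_isHB d (sig : nat -> 'M[K]_d) : isHD q e sig -> isHB q e (coind sig).
Proof.
case=> h1 h2 h3 h4 h5; split.
- rewrite /coind /= mulmxDl !mulmxBr swpK mul1mx mulmx1.
  by rewrite mulmx1 addrA subrK subrr.
- move=> [|[|i]] hi //=; rewrite /coind /=.
  + rewrite -!dgS dgD dgB dgM !h1 ?dg0 //; lia.
  + rewrite -!dgS dgD dgB dgM !h1 ?dg0 //; lia.
- rewrite /coind /=.
  have -> : swp K d *m dg (sig 1%N) (sig 0%N) *m swp K d *m dg (sig 1%N) (sig 0%N)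
     = dg (sig 0%N) (sig 1%N) *m (swp K d *m swp K d) *m dg (sig 1%N) (sig 0%N).
    by rewrite swpM !mulmxA.
  have -> : dg (sig 1%N) (sig 0%N) *m swp K d *m dg (sig 1%N) (sig 0%N) *m swp K d
     = dg (sig 1%N) (sig 0%N) *m dg (sig 0%N) (sig 1%N) *m (swp K d *m swp K d).
    by rewrite -(mulmxA _ (swp K d)) swpM !mulmxA.
  rewrite swpK mulmx1 mulmx1 !dgM h3 //; lia.
- move=> [|[|[|i]]] hi; first by [].
  + rewrite /coind /= !dgM; apply: dg_eq.
    * by apply: h4.
    * apply: esym; apply: h2; lia.
  + rewrite /coind /= !dgM; apply: dg_eq; apply: h4; lia.
  + rewrite /coind /= !dgM; apply: dg_eq; apply: h4; lia.
- move=> [|[|i]] [|[|[|j]]] hij hj hj1; try by [].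
  + by rewrite /coind /= swpM.
  + by rewrite /coind /= swpM.
  + rewrite /coind /= !dgM; apply: dg_eq; [apply: h5 | apply: h3]; lia.
  + rewrite /coind /= !dgM; apply: dg_eq; apply: h5; lia.
Qed.


Lemma res_coind d (sig : nat -> 'M[K]_d) i :
  resBD (coind sig) i = if i == 0%N then dg (sig 0%N) (sig 1%N) else coind sig i.
Proof.
case: i => [|i] //=; rewrite /resBD /coind /=.
by rewrite swpM -mulmxA swpK mulmx1.
Qed.

End CoInd.

Lemma commM (K : fieldType) d (A B X : 'M[K]_d) :
  A *m X = X *m A -> B *m X = X *m B -> A *m B *m X = X *m (A *m B).
Proof. by move=> hA hB; rewrite -mulmxA hB mulmxA hA mulmxA. Qed.

Section Res.
Variables (K : fieldType) (q : K) (e : nat) (He : (2 <= e)%N).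

Lemma res_isHD d (rho : nat -> 'M[K]_d) : isHB q e rho -> isHD q e (resBD rho).
Proof.
case=> h1 h2 h3 h4 h5.
have sq : rho 0%N *m rho 0%N = 1%:M.
  apply/eqP; rewrite -subr_eq0; apply/eqP.
  by rewrite -h1 mulmxDl mulmxBr mul1mx mulmx1 addrA subrK.
have c02 : (2 < e)%N -> rho 0%N *m rho 2%N = rho 2%N *m rho 0%N.
  by move=> he; apply: h5; lia.
split.
- move=> [|i] hi; rewrite /resBD /=; last by apply: h2; lia.
  have -> : rho 0%N *m rho 1%N *m rho 0%N + 1%:M
     = rho 0%N *m (rho 1%N + 1%:M) *m rho 0%N.
    by rewrite mulmxDr mulmxDl mulmx1 sq.
  have -> : rho 0%N *m rho 1%N *m rho 0%N - q%:M
     = rho 0%N *m (rho 1%N - q%:M) *m rho 0%N.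
    by rewrite mulmxBr mulmxBl scalar_mxC -(mulmxA q%:M) sq mulmx1.
  rewrite !mulmxA -(mulmxA _ (rho 0%N) (rho 0%N)) sq mulmx1.
  rewrite -(mulmxA (rho 0%N)) h2 ?mulmx0 ?mul0mx //; lia.
- move=> he; rewrite /resBD /=.
  have e1 : rho 0%N *m rho 1%N *m rho 0%N *m rho 2%N *m (rho 0%N *m rho 1%N *m rho 0%N)
      = rho 0%N *m (rho 1%N *m rho 2%N *m rho 1%N) *m rho 0%N.
    rewrite !mulmxA -(mulmxA _ (rho 0%N) (rho 2%N)) c02 //.
    by rewrite !mulmxA -(mulmxA (rho 0%N *m rho 1%N *m rho 2%N) (rho 0%N) (rho 0%N)) sq mulmx1.
  have e2 : rho 2%N *m (rho 0%N *m rho 1%N *m rho 0%N) *m rho 2%N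
      = rho 0%N *m (rho 2%N *m rho 1%N *m rho 2%N) *m rho 0%N.
    have -> : rho 2%N *m (rho 0%N *m rho 1%N *m rho 0%N) *m rho 2%N
      = (rho 2%N *m rho 0%N) *m rho 1%N *m (rho 0%N *m rho 2%N) by rewrite !mulmxA.
    have -> : rho 0%N *m (rho 2%N *m rho 1%N *m rho 2%N) *m rho 0%N
      = (rho 0%N *m rho 2%N) *m rho 1%N *m (rho 2%N *m rho 0%N) by rewrite !mulmxA.
    by rewrite !c02.
  rewrite e1 e2 h4 //; lia.
- move=> [|[|i]] hi hi2; rewrite /resBD /=.
  + by [].
  + by rewrite !mulmxA h3.
  + have c0 : rho 0%N *m rho i.+2 = rho i.+2 *m rho 0%N by apply: h5; lia.
    have c1 : rho 1%N *m rho i.+2 = rho i.+2 *m rho 1%N by apply: h5; lia.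
    by apply: commM => //; apply: commM.
- move=> [|i] hi; first by [].
  by rewrite /resBD /=; apply: h4.
- move=> [|i] [|j] hi hij hj hj1 //.
  by rewrite /resBD /=; apply: h5.
Qed.

Lemma sign_isHB : isHB q e (sign_mod K).
Proof.
rewrite /sign_mod; split.
- by rewrite addNr mul0mx.
- by move=> i _; rewrite addNr mul0mx.
- by [].
- by [].
- by [].
Qed.

Lemma sign_isHD : isHD q e (sign_mod K).
Proof.
rewrite /sign_mod; split => //.
by move=> i _; rewrite addNr mul0mx.
Qed.

Lemma res_sign : resBD (sign_mod K) =1 sign_mod K.
Proof.
move=> [|i] //; rewrite /resBD /sign_mod /=.
by rewrite !(mulNmx, mulmxN, mul1mx) opprK.
Qed.

Lemma two_neq0 : ~~ odd e -> e.-primitive_root q -> (2 : K) != 0.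
Proof.
move=> ev pr; apply/negP => /eqP h2.
have [m em] : exists m, e = (m.*2)%N by exists e./2; rewrite -[LHS]odd_double_half (negbTE ev).
have m0 : (0 < m)%N by lia.
have qm : q ^+ m = 1.
  have : (q ^+ m - 1) * (q ^+ m - 1) = 0.
    have E : (q ^+ m - 1) * (q ^+ m - 1) = (q ^+ m * q ^+ m - 1) - 2 * (q ^+ m - 1) by ring.
    by rewrite E -exprD addnn -em (UnityRootTheory.prim_expr_order pr) subrr h2 mul0r subr0.
  by move/eqP; rewrite mulf_eq0 orbb subr_eq0 => /eqP.
have /(dvdn_leq m0) : (e %| m)%N by rewrite (prim_order_dvd pr) qm.
lia.
Qed.

End Res.

Lemma homM (K : fieldType) m n (f : 'M[K]_(m, n)) A B A' B' :
  f *m A = A' *m f -> f *m B = B' *m f -> f *m (A *m B) = (A' *m B') *m f.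
Proof. by move=> hA hB; rewrite mulmxA hA -mulmxA hB mulmxA. Qed.

Lemma usub_dg (K : fieldType) m n p (A B : 'M[K]_(m, n)) (G : 'M[K]_(n + n, p)) :
  usubmx (dg A B *m G) = A *m usubmx G.
Proof. by rewrite -{1}[G]vsubmxK /dg mul_block_col col_mxKu mul0mx addr0. Qed.

Lemma usubM (K : fieldType) m n p (G : 'M[K]_(m + m, n)) (X : 'M[K]_(n, p)) :
  usubmx (G *m X) = usubmx G *m X.
Proof. by rewrite -{1}[G]vsubmxK mul_col_mx col_mxKu. Qed.

Lemma swp_col (K : fieldType) m p (A B : 'M[K]_(m, p)) :
  swp K m *m col_mx A B = col_mx B A.
Proof. by rewrite /swp mul_block_col !mul0mx !mul1mx addr0 add0r. Qed.

Lemma dg_col (K : fieldType) m n p (A B : 'M[K]_(m, n)) (C D : 'M[K]_(n, p)) :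
  dg A B *m col_mx C D = col_mx (A *m C) (B *m D).
Proof. by rewrite /dg mul_block_col !mul0mx addr0 add0r. Qed.

Section Proj.
Variables (K : fieldType) (q : K) (e : nat) (He : (2 <= e)%N).

Lemma isHB_sq d (rho : nat -> 'M[K]_d) : isHB q e rho -> rho 0%N *m rho 0%N = 1%:M.
Proof.
case=> h1 _ _ _ _; apply/eqP; rewrite -subr_eq0; apply/eqP.
by rewrite -h1 mulmxDl mulmxBr mul1mx mulmx1 addrA subrK.
Qed.

Lemma dg_hom dM dN (rM : nat -> 'M[K]_dM) (rN : nat -> 'M[K]_dN) (pi : 'M[K]_(dN, dM)) :
  is_hom e rM rN pi -> is_hom e (coind rM) (coind rN) (dg pi pi).
Proof.
move=> h [|[|i]] hi; rewrite /coind /=.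
- by rewrite swpM.
- by rewrite !dgM h // h //; lia.
- by rewrite !dgM h.
Qed.

Lemma res_proj dP (rho : nat -> 'M[K]_dP) :
  isHB q e rho -> projective (isHB q e) e rho -> projective (isHD q e) e (resBD rho).
Proof.
move=> HB Hpr dM rM dN rN pi f HM HN hpi spi hf.
have sq := isHB_sq HB.
case: (HB) => _ _ _ _ h5.
pose F := col_mx f (f *m rho 0%N).
have hF : is_hom e rho (coind rN) F.
  move=> [|[|i]] hi; rewrite /F /coind /= mul_col_mx.
  - by rewrite swp_col -mulmxA sq mulmx1.
  - rewrite dg_col; congr col_mx.
      by have := hf 1%N hi.
    have := hf 0%N (ltn_trans (ltnSn 0) hi); rewrite /resBD /= => h0.
    by rewrite mulmxA -h0 -!mulmxA sq mulmx1.
  - rewrite dg_col; congr col_mx.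
      by have := hf i.+2 hi.
    rewrite -mulmxA (h5 0%N i.+2); try lia.
    by rewrite mulmxA; have := hf i.+2 hi; rewrite /resBD /= => ->; rewrite mulmxA.
have Hsurj : is_surj (dg pi pi).
  by rewrite /is_surj /dg rank_diag_block_mx spi.
have [G [hG piG]] := Hpr _ (coind rM) _ (coind rN) (dg pi pi) F
  (coind_isHB He HM) (coind_isHB He HN) (dg_hom hpi) Hsurj hF.
exists (usubmx G); split.
- move=> [|[|i]] hi; rewrite /resBD /=.
  + have h0 : (0 < e)%N by lia.
    have h1 : (1 < e)%N by lia.
    have := homM (homM (hG 0%N h0) (hG 1%N h1)) (hG 0%N h0).
    move/(congr1 (@usubmx _ _ _ _)).
    have -> : coind rM 0%N *m coind rM 1%N *m coind rM 0%N = dg (rM 0%N) (rM 1%N).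
      by rewrite /coind /= swpM -mulmxA swpK mulmx1.
    by rewrite usub_dg usubM.
  + by have := congr1 (@usubmx _ _ _ _) (hG 1%N hi); rewrite /coind /= usub_dg usubM.
  + by have := congr1 (@usubmx _ _ _ _) (hG i.+2 hi); rewrite /coind /= usub_dg usubM.
- by have := congr1 (@usubmx _ _ _ _) piG; rewrite usub_dg /F col_mxKu.
Qed.

End Proj.

Lemma zmodE (V : zmodType) (a b c f : V) : a + b + (c - f) - a - c = b - f.
Proof.
rewrite [a + b]addrC -[b + a + _]addrA [a + _]addrC addrA addrK.
by rewrite addrCA [c + _]addrC addrK.
Qed.

Section SubLemmas.
Variable (F : fieldType).

Lemma subB' m2 m3 n (A B : 'M[F]_(m2, n)) (C : 'M[F]_(m3, n)) :
  (A <= C)%MS -> (B <= C)%MS -> (A - B <= C)%MS.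
Proof. by move=> hA hB; apply: addmx_sub => //; rewrite (eqmx_opp B). Qed.

Lemma sub0 m1 m2 n p (A : 'M[F]_(m1, n)) (B : 'M[F]_(m2, n)) (C : 'M[F]_(n, p)) :
  (A <= B)%MS -> B *m C = 0 -> A *m C = 0.
Proof. by move=> /submxP [D ->] h; rewrite -mulmxA h mulmx0. Qed.

Lemma stabS m1 m2 n (A : 'M[F]_(m1, n)) (B : 'M[F]_(m2, n)) (X : 'M[F]_n) :
  (A <= B)%MS -> (B *m X <= B)%MS -> (A *m X <= B)%MS.
Proof. by move=> h1 h2; apply: submx_trans h2; apply: submxMr. Qed.

End SubLemmas.

Section Ess.
Variables (K : fieldType) (q : K) (e : nat) (He : (2 <= e)%N) (two : (2 : K) != 0).
Variables (d : nat) (rho : nat -> 'M[K]_d) (HB : isHB q e rho).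
Variables (p : 'M[K]_(1, d)).
Hypothesis Hp : essential_epi (isHB q e) e rho (sign_mod K) p.

Local Notation t i := ((rho i)^T).

Lemma tt0 : t 0%N *m t 0%N = 1%:M.
Proof. by rewrite -trmx_mul (isHB_sq HB) trmx1. Qed.

Lemma tcomm i : (2 <= i < e)%N -> t 0%N *m t i = t i *m t 0%N.
Proof. 
move=> hi; case: HB => _ _ _ _ h5.
by rewrite -!trmx_mul (h5 0%N i) //; lia.
Qed.

Lemma tp i : (i < e)%N -> t i *m p^T = - p^T.
Proof.
move=> hi; case: Hp => hp _ _.
by rewrite -trmx_mul hp // /sign_mod mulNmx mul1mx linearN.
Qed.

Lemma tpM n (X : 'M[K]_(n, d)) i : (i < e)%N -> X *m t i *m p^T = - (X *m p^T).
Proof. by move=> hi; rewrite -mulmxA tp // mulmxN. Qed.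

Lemma pr i : (i < e)%N -> p *m rho i = - p.
Proof.
by move=> hi; case: Hp => hp _ _; rewrite hp // /sign_mod mulNmx mul1mx.
Qed.

Lemma tD0p : t 0%N *m t 1%N *m t 0%N *m p^T = - p^T.
Proof.
have h0 : (0 < e)%N by lia.
have h1 : (1 < e)%N by lia.
by rewrite tpM // tpM // tp // !opprK.
Qed.

Definition Dstab m (U : 'M[K]_(m, d)) :=
  (U *m (t 0%N *m t 1%N *m t 0%N) <= U)%MS /\ forall i, (1 <= i < e)%N -> (U *m t i <= U)%MS.

Definition Bstab m (U : 'M[K]_(m, d)) := forall i, (i < e)%N -> (U *m t i <= U)%MS.

Lemma Dstab_t0 m (U : 'M[K]_(m, d)) : Dstab U ->
  forall i, (1 <= i < e)%N -> (U *m t 0%N *m t i <= U *m t 0%N)%MS.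
Proof.
case=> h0 hi [|[|i]] lt //.
- have -> : U *m t 0%N *m t 1%N = U *m (t 0%N *m t 1%N *m t 0%N) *m t 0%N.
    by rewrite !mulmxA -(mulmxA _ (t 0%N) (t 0%N)) tt0 mulmx1.
  by rewrite submxMr.
- rewrite -mulmxA tcomm; last lia.
  by rewrite mulmxA submxMr // hi //; lia.
Qed.

Lemma tt0K m (U : 'M[K]_(m, d)) : U *m t 0%N *m t 0%N = U.
Proof. by rewrite -mulmxA tt0 mulmx1. Qed.

Local Notation K0 := (kermx p^T).

Lemma K0p : K0 *m p^T = 0.
Proof. by apply/eqP; rewrite -sub_kermx submx_refl. Qed.

Lemma K0stab (X : 'M[K]_d) : X *m p^T = - p^T -> (K0 *m X <= K0)%MS.
Proof. by move=> h; rewrite sub_kermx -mulmxA h mulmxN K0p oppr0. Qed.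

Variables (m : nat) (U : 'M[K]_(m, d)) (HU : Dstab U).
Hypothesis Up : U *m p^T != 0.

Local Notation W := (U :&: U *m t 0%N)%MS.

Lemma W_Bstab : Bstab W.
Proof.
case: (HU) => h0 hi.
move=> [|i] lt; rewrite sub_capmx; apply/andP; split.
- rewrite -[X in (_ <= X)%MS](tt0K U) submxMr //; exact: capmxSr.
- by rewrite submxMr // capmxSl.
- by apply: (stabS (capmxSl _ _)); apply: hi; lia.
- by apply: (stabS (capmxSr _ _)); apply: Dstab_t0 => //; lia.
Qed.

Local Notation U0 := (U :&: K0)%MS.

Lemma U0_Dstab : Dstab U0.
Proof.
case: (HU) => h0 hi; split.
- rewrite sub_capmx; apply/andP; split.
    exact: stabS (capmxSl _ _) h0.
  apply: stabS (capmxSr _ _) _; apply: K0stab; exact: tD0p.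
- move=> i lt; rewrite sub_capmx; apply/andP; split.
    exact: stabS (capmxSl _ _) (hi i lt).
  apply: stabS (capmxSr _ _) _; apply: K0stab; apply: tp; lia.
Qed.

Local Notation V := (U0 + U0 *m t 0%N + U *m (1%:M - t 0%N))%MS.

Lemma inV1 n (X : 'M[K]_(n, d)) : (X <= U0)%MS -> (X <= V)%MS.
Proof. by move=> h; apply: (submx_trans h); rewrite -addsmxA addsmxSl. Qed.
Lemma inV2 n (X : 'M[K]_(n, d)) : (X <= U0 *m t 0%N)%MS -> (X <= V)%MS.
Proof.
move=> h; apply: (submx_trans h); apply: (submx_trans _ (addsmxSl _ _)).
exact: addsmxSr.
Qed.
Lemma inV3 n (X : 'M[K]_(n, d)) : (X <= U *m (1%:M - t 0%N))%MS -> (X <= V)%MS.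
Proof. by move=> h; apply: (submx_trans h); rewrite addsmxSr. Qed.

Lemma V_Bstab : Bstab V.
Proof.
case: (HU) => h0 hi.
have [u0 ui] := U0_Dstab.
move=> [|i] lt; rewrite addsmxMr addsmx_sub addsmxMr addsmx_sub -andbA; apply/and3P; split.
- by apply: inV2.
- by apply: inV1; rewrite tt0K.
- apply: inV3; rewrite -mulmxA mulmxBl mul1mx tt0 -opprB mulmxN.
  by rewrite (eqmx_opp (U *m (1%:M - t 0%N))).
- by apply: inV1; apply: ui; lia.
- by apply: inV2; apply: Dstab_t0 => //; lia.
- case: i lt => [|i] lt.
  +
    have -> : U *m (1%:M - t 0%N) *m t 1%N
       = U *m t 1%N *m (1%:M - t 0%N) + (U *m t 1%N - U *m (t 0%N *m t 1%N *m t 0%N)) *m t 0%N.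
      rewrite !mulmxBr !mulmxBl !mulmx1 !mulmxA tt0K.
      by rewrite addrA subrK.
    apply: addmx_sub.
      by apply: inV3; apply: submxMr; apply: hi.
    apply: inV2; apply: submxMr; rewrite sub_capmx; apply/andP; split.
      by apply: subB'; [apply: hi | apply: h0].
    by rewrite sub_kermx mulmxBl tpM // -(mulmxA U) tD0p mulmxN subrr.
  + have -> : U *m (1%:M - t 0%N) *m t i.+2 = U *m t i.+2 *m (1%:M - t 0%N).
      rewrite !mulmxBr !mulmxBl !mulmx1 -!mulmxA tcomm //; lia.
    by apply: inV3; apply: submxMr; apply: hi; lia.
Qed.

Lemma V_p : V *m p^T != 0.
Proof.
apply: contra Up => /eqP Vp.
have h : (U *m (1%:M - t 0%N)) *m p^T = 0.
  apply: sub0 Vp; exact: inV3 (submx_refl _).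
have h0 : (0 < e)%N by lia.
have e1 : U *m p^T = U *m t 0%N *m p^T.
  by apply/eqP; rewrite -subr_eq0 -mulmxBl -{1}[U]mulmx1 -mulmxBr -h.
have e3 : U *m p^T = - (U *m p^T) := etrans e1 (tpM U h0).
move/eqP: e3; rewrite -addr_eq0 -mulr2n -scaler_nat scalemx_eq0 (negbTE two) /=.
by [].
Qed.

Lemma U_full : \rank U = d.
Proof.
have h0 : (0 < e)%N by lia.
have U0U : (U0 <= U)%MS := capmxSl _ _.
have U0K : (U0 <= K0)%MS := capmxSr _ _.
case: (boolP (W *m p^T == 0)) => Wp; last first.
  have rW := ess_sub He HB W_Bstab Hp Wp.
  apply/eqP; rewrite eqn_leq rank_leq_col -{1}rW mxrankS //; exact: capmxSl.
exfalso; move/negP: Up; apply.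
have rV := ess_sub He HB V_Bstab Hp V_p.
have UV : (U <= V)%MS by apply: submx_full; rewrite /row_full rV.
case/sub_addsmxP: UV => [[D1 D2]] /= UE.
have : (D1 *m (U0 + U0 *m t 0%N)%MS <= U0 + U0 *m t 0%N)%MS := submxMl _ _.
case/sub_addsmxP => [[E1 E2]] /= DE.
set X := E1 *m U0; set Y := E2 *m U0; set Z := D2 *m U.
have XU : (X <= U)%MS by apply: mulmx_sub.
have YU : (Y <= U)%MS by apply: mulmx_sub.
have ZU : (Z <= U)%MS by apply: mulmx_sub; exact: submx_refl.
have XK : (X <= K0)%MS by apply: mulmx_sub.
have YK : (Y <= K0)%MS by apply: mulmx_sub.
have UE' : U = X + Y *m t 0%N + Z *m (1%:M - t 0%N).
  by rewrite {1}UE DE /X /Y /Z !mulmxA.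
have LE : U - X - Z = (Y - Z) *m t 0%N.
  rewrite {1}UE' mulmxBr mulmx1 mulmxBl.
  exact: zmodE.
have LW : (U - X - Z <= W)%MS.
  rewrite sub_capmx; apply/andP; split.
    by apply: subB'; [apply: subB'; [exact: submx_refl|] |].
  by rewrite LE submxMr //; apply: subB'.
have WK : (W <= K0)%MS by rewrite sub_kermx.
have LK : (U - X - Z <= K0)%MS := submx_trans LW WK.
have YZK : (Y - Z <= K0)%MS.
  have -> : Y - Z = (U - X - Z) *m t 0%N by rewrite LE tt0K.
  apply: submx_trans WK; apply: stabS LW _; exact: W_Bstab.
have ZK : (Z <= K0)%MS.
  have -> : Z = Y - (Y - Z) by rewrite opprB addrC subrK.
  exact: subB'.
have UK : (U <= K0)%MS.
  have -> : U = (U - X - Z) + Z + X by rewrite subrK subrK.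
  by apply: addmx_sub; [apply: addmx_sub|].
by rewrite -sub_kermx.
Qed.

End Ess.

Lemma negM (K : fieldType) n d (p : 'M[K]_(n, d)) (A B : 'M[K]_d) :
  p *m A = - p -> p *m B = - p -> p *m (A *m B) = p.
Proof.
move=> hA hB; rewrite mulmxA hA.
have E : (- p) *m B = - (p *m B) by exact: mulNmx.
by rewrite E hB opprK.
Qed.

Section Final.
Variables (K : fieldType) (q : K) (e : nat) (He : (2 <= e)%N) (two : (2 : K) != 0).

Lemma res_ess d (rho : nat -> 'M[K]_d) (p : 'M[K]_(1, d)) :
  isHB q e rho -> essential_epi (isHB q e) e rho (sign_mod K) p ->
  essential_epi (isHD q e) e (resBD rho) (sign_mod K) p.
Proof.
move=> HB Hp.
have h0 : (0 < e)%N by lia.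
have h1 : (1 < e)%N by lia.
have hpr : forall i, (i < e)%N -> p *m rho i = - p.
  by move=> i hi; case: (Hp) => hp _ _; rewrite hp // /sign_mod mulNmx mul1mx.
case: (Hp) => hp sp ess; split => //.
- move=> [|i] hi; last exact: hp.
  rewrite /resBD /= /sign_mod.
  have E : - 1%:M *m p = - p by rewrite mulNmx mul1mx.
  rewrite E mulmxA (negM (hpr _ h0) (hpr _ h1)).
  exact: hpr.
- move=> dM rM g HM hg spg.
  have HU : Dstab e rho g^T.
    split.
    + have := hg 0%N h0; rewrite /resBD /= => E.
      have -> : g^T *m ((rho 0%N)^T *m (rho 1%N)^T *m (rho 0%N)^T)
              = (rM 0%N)^T *m g^T.
        by rewrite -!trmx_mul E !mulmxA.
      exact: submxMl.
    + move=> [|i] hi //.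
      have := hg i.+1 (proj2 (andP hi)); rewrite /resBD /= => E.
      by rewrite -trmx_mul -E trmx_mul submxMl.
  have Up : g^T *m p^T != 0.
    rewrite -trmx_mul trmx_eq0 -mxrank_eq0.
    by move: spg; rewrite /is_surj => ->.
  by rewrite /is_surj -mxrank_tr (U_full He two HB Hp HU Up).
Qed.

Lemma cover_unique dP (rP : nat -> 'M[K]_dP) dQ (rQ : nat -> 'M[K]_dQ)
  (p1 : 'M[K]_(1, dP)) (p2 : 'M[K]_(1, dQ)) :
  isHD q e rP -> projective (isHD q e) e rP -> essential_epi (isHD q e) e rP (sign_mod K) p1 ->
  isHD q e rQ -> projective (isHD q e) e rQ -> essential_epi (isHD q e) e rQ (sign_mod K) p2 ->
  mod_iso e rQ rP.
Proof.
move=> HP prP [hp1 sp1 es1] HQ prQ [hp2 sp2 es2].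
have HS := sign_isHD q e.
have [f [hf pf]] := prP _ rQ _ (sign_mod K) p2 p1 HQ HS hp2 sp2 hp1.
have [g [hg pg]] := prQ _ rP _ (sign_mod K) p1 p2 HP HS hp1 sp1 hp2.
have homc : forall m n r (A : 'M[K]_(m, n)) (B : 'M[K]_(n, r)) r1 r2 r3,
    is_hom e r1 r2 B -> is_hom e r2 r3 A -> is_hom e r1 r3 (A *m B).
  by move=> m n r A B r1 r2 r3 hB hA i hi; rewrite -mulmxA hB // !mulmxA hA.
have uA : g *m f \in unitmx.
  rewrite -row_free_unit /row_free; apply/eqP.
  apply: (es1 _ rP (g *m f) HP (homc _ _ _ _ _ _ _ _ hf hg)).
  by rewrite mulmxA pg pf.
have uB : f *m g \in unitmx.
  rewrite -row_free_unit /row_free; apply/eqP.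
  apply: (es2 _ rQ (f *m g) HQ (homc _ _ _ _ _ _ _ _ hg hf)).
  by rewrite mulmxA pf pg.
set G := f *m invmx (g *m f).
have gG : g *m G = 1%:M by rewrite /G mulmxA mulmxV.
have Lg : invmx (f *m g) *m f *m g = 1%:M by rewrite -mulmxA mulVmx.
have Gg : G *m g = 1%:M.
  have -> : G = invmx (f *m g) *m f by rewrite -[RHS]mulmx1 -gG mulmxA Lg mul1mx.
  exact: Lg.
exists g, G; split => //.
move=> i hi.
rewrite -[G *m rP i]mulmx1 -gG mulmxA -(mulmxA G) -hg //.
by rewrite !mulmxA Gg mul1mx.
Qed.

End Final.

Unset Implicit Arguments.

Theorem lemma3p6 (K : fieldType) (e : nat) (q : K) :
  (2 <= e)%N -> ~~ odd e -> e.-primitive_root q ->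
  forall (dP : nat) (rhoP : nat -> 'M[K]_dP),
    projective_cover (isHD q e) e rhoP (sign_mod K) ->
  forall (dPl : nat) (rhoPl : nat -> 'M[K]_dPl),
    projective_cover (isHB q e) e rhoPl (sign_mod K) ->
  mod_iso e (resBD rhoPl) rhoP.
Proof.
move=> He ev pr dP rhoP [HP prP [p1 es1]] dPl rhoPl [HB prB [p2 es2]].
have two := two_neq0 He ev pr.
apply: (cover_unique (q := q) (p1 := p1) (p2 := p2)) => //.
- exact: res_isHD.
- exact: res_proj.
- exact: res_ess.
Qed.
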